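(* Let $v$ be the last installed view in the system. Then view $v$ will eventually be changed (i.e., $v.succ$ will eventually be installed).
   Context: System: servers $S=\{s_1,\dots,s_n\}$; reliable links, message passing; asynchronous; crash failures only (a server is correct if it does not crash); at most $f$ servers crash and $2f+1\le n$. Views form a sequence $v_0,v_1,\dots$ with $v_{k+1}=v_k.succ$; $v<w$ means $w$ is obtained from $v$ by applying $succ$ one or more times. Each server $s$ has a current view $s.cview$ (initially $v_0$), a local timeout per view, and a weight in each view; in every view each server's weight is strictly between $\mathbb{wl}=n/(2(n-f))$ and $\mathbb{wu}=n/(2f)$ and the total weight is at most $n$. A weighted majority for view $v$ is a set of servers whose weights in $v$ sum to more than $n/2$. View changer run by each server $s$ with $s.cview=v$: when its local timeout for $v$ expires it sends $\langle\text{change\_view},v.succ\rangle$ to all servers; once it has received or sent change\_view for $v.succ$ it forwards it if not already sent, disables read/write operations, sends $\langle\text{state\_update},(val,ts,cid),v,w\rangle$ to all servers — at this point it has uninstalled $v$ — waits until it has state\_update messages for view $v$ whose weights sum to more than $n/2$, adopts the value with lexicographically largest $(ts,cid)$, then sets $s.cview\leftarrow v.succ$ (installs $v.succ$), sets a new timeout and re-enables read/write operations. A view $v$ is installed in the system once at least one server installs $v$ and every server $s$ satisfies $s.cview\le v$. *)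

(* Defs.v *)
From mathcomp Require Import all_boot all_order all_algebra.
Set Implicit Arguments. Unset Strict Implicit. Unset Printing Implicit Defensive.
Import Order.TTheory GRing.Theory Num.Theory.

(* Views v_0, v_1, ... are represented by their index k : nat; v.succ = v.+1
   and v < w is the order on nat. *)

(* Register contents (val, ts, cid) : ((val, ts), cid). *)
Definition data := (nat * nat * nat)%type.
Definition dts (d : data) : nat := d.1.2.
Definition dcid (d : data) : nat := d.2.
Definition lex_le (d1 d2 : data) : bool :=
  (dts d1 < dts d2) || ((dts d1 == dts d2) && (dcid d1 <= dcid d2)).

(* Message bodies: inl w = <change_view, w>;
   inr (d, v, w) = <state_update, d, v, w>. *)
Definition body := (nat + (data * nat * nat))%type.
Definition CV (w : nat) : body := inl w.
Definition SU (d : data) (v w : nat) : body := inr (d, v, w).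

Section Model.
Variable n : nat.
Definition server := 'I_n.

(* a message in transit: (source, destination, body) *)
Definition msg := (server * server * body)%type.

Record lstate := LState {
  cview   : nat;
  ldata   : data;
  ops_on  : bool;                (* read/write operations enabled *)
  cv_sent : bool;                (* sent change_view for cview.succ *)
  su_sent : bool;                (* sent state_update for cview (uninstalled) *)
  alive   : bool;
  inbox   : seq (server * body)  (* received messages (sender, body) *)
}.

Record config := Config {
  ls   : server -> lstate;
  sent : seq msg                 (* every message ever sent *)
}.

Definition init_config (d0 : data) : config :=
  Config (fun _ => LState 0 d0 true false false true [::]) [::].

Definition upd (f : server -> lstate) (s : server) (x : lstate) :=
  fun p => if p == s then x else f p.

Definition broadcast (s : server) (b : body) : seq msg :=
  [seq (s, p, b) | p <- enum 'I_n].

Definition su_senders (x : lstate) (v : nat) : {set server} :=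
  [set p | has (fun m => (m.1 == p) &&
      (if m.2 is inr (_, v', _) then v' == v else false)) (inbox x)].

Variable weight : nat -> server -> rat.

Definition wsum (v : nat) (A : {set server}) : rat := \sum_(s in A) weight v s.

Definition weighted_majority (v : nat) (A : {set server}) : Prop :=
  (n%:R / 2 < wsum v A)%R.

Definition en_timeout (x : lstate) : Prop :=
  alive x /\ ~~ cv_sent x.
Definition en_uninstall (x : lstate) : Prop :=
  [/\ alive x, ~~ su_sent x &
      (cv_sent x \/ exists p, (p, CV (cview x).+1) \in inbox x)].
Definition en_install (x : lstate) : Prop :=
  [/\ alive x, su_sent x & weighted_majority (cview x) (su_senders x (cview x))].

Definition adoptable (x : lstate) (v : nat) (d : data) : Prop :=
  (exists p w, (p, SU d v w) \in inbox x) /\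
  (forall p d' w, (p, SU d' v w) \in inbox x -> lex_le d' d).

Inductive step (c c' : config) : Prop :=
| StStutter : c' = c -> step c c'
| StDeliver (src dst : server) (b : body) :
    (src, dst, b) \in sent c ->
    let x := ls c dst in
    c' = Config (upd (ls c) dst
                   (LState (cview x) (ldata x) (ops_on x) (cv_sent x)
                           (su_sent x) (alive x) ((src, b) :: inbox x)))
                (sent c) -> step c c'
| StTimeout (s : server) :
    let x := ls c s in
    en_timeout x ->
    c' = Config (upd (ls c) s
                   (LState (cview x) (ldata x) (ops_on x) true
                           (su_sent x) (alive x) (inbox x)))
                (broadcast s (CV (cview x).+1) ++ sent c) -> step c c'
| StUninstall (s : server) :
    let x := ls c s in
    en_uninstall x ->
    c' = Config (upd (ls c) s
                   (LState (cview x) (ldata x) false true true (alive x) (inbox x)))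
                (broadcast s (SU (ldata x) (cview x) (cview x).+1)
                 ++ (if cv_sent x then [::] else broadcast s (CV (cview x).+1))
                 ++ sent c) -> step c c'
| StInstall (s : server) (d : data) :
    let x := ls c s in
    en_install x -> adoptable x (cview x) d ->
    c' = Config (upd (ls c) s
                   (LState (cview x).+1 d true false false (alive x) (inbox x)))
                (sent c) -> step c c'
| StOp (s : server) (d : data) :
    let x := ls c s in
    alive x -> ops_on x ->
    c' = Config (upd (ls c) s
                   (LState (cview x) d (ops_on x) (cv_sent x) (su_sent x)
                           (alive x) (inbox x)))
                (sent c) -> step c c'
| StCrash (s : server) :
    let x := ls c s in
    alive x ->
    c' = Config (upd (ls c) s
                   (LState (cview x) (ldata x) (ops_on x) (cv_sent x)
                           (su_sent x) false (inbox x)))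
                (sent c) -> step c c'.

Definition execution (d0 : data) (c : nat -> config) : Prop :=
  c 0 = init_config d0 /\ forall t, step (c t) (c t.+1).

Definition correct (c : nat -> config) (s : server) : Prop :=
  forall t, alive (ls (c t) s).

Definition reliable_links (c : nat -> config) : Prop :=
  forall t src dst b, (src, dst, b) \in sent (c t) -> correct c dst ->
    exists t', (src, b) \in inbox (ls (c t') dst).

(* weak fairness of the view-changer actions of correct servers (local
   timeouts eventually expire, enabled actions are eventually taken):
   no such action stays enabled forever *)
Definition fair (c : nat -> config) : Prop :=
  forall s, correct c s -> forall t,
    [/\ exists t', t <= t' /\ ~ en_timeout (ls (c t') s),
        exists t', t <= t' /\ ~ en_uninstall (ls (c t') s) &
        exists t', t <= t' /\ ~ en_install (ls (c t') s)].

Definition at_most_f_crash (c : nat -> config) (f : nat) : Prop :=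
  exists F : {set server}, #|F| <= f /\ forall s, s \notin F -> correct c s.

Definition installed_sys (x : config) (v : nat) : Prop :=
  (exists s, cview (ls x s) = v) /\ (forall s, cview (ls x s) <= v).

End Model.

(* weight constraints: wl < weight < wu with wl = n/(2(n-f)), wu = n/(2f)
   (written multiplied out, so f = 0 means no upper bound), total <= n *)
Definition weights_ok (n f : nat) (weight : nat -> 'I_n -> rat) : Prop :=
  forall v, (forall s, (n%:R < 2 * (n - f)%:R * weight v s)%R /\
                       (2 * f%:R * weight v s < n%:R)%R)
            /\ (\sum_(s : 'I_n) weight v s <= n%:R)%R.

(* Main.v *)
Require Import Defs.
From mathcomp Require Import all_boot all_order all_algebra.
From mathcomp Require Import zify.
From Stdlib Require Import Classical.
Set Implicit Arguments. Unset Strict Implicit. Unset Printing Implicit Defensive.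
Import Order.TTheory GRing.Theory Num.Theory.


Lemma step_mono n (weight : nat -> 'I_n -> rat) c c' p :
  step weight c c' ->
  [/\ cview (ls c p) <= cview (ls c' p) <= (cview (ls c p)).+1,
      (cview (ls c' p) = cview (ls c p) ->
        (cv_sent (ls c p) -> cv_sent (ls c' p)) /\ (su_sent (ls c p) -> su_sent (ls c' p))),
      {subset inbox (ls c p) <= inbox (ls c' p)} &
      {subset sent c <= sent c'}].
Proof.
case=> [->|src dst b _ x ->|s x _ ->|s x _ ->|s d x _ _ ->|s d x _ _ ->|s x _ ->];
  rewrite /upd /=; try (case: eqP => [->|_]);
  rewrite ?leqnn ?leqnSn //=; split => //;
  try (by move=> m; rewrite ?mem_cat => ->; rewrite ?orbT);
  try (by move=> m; rewrite inE => ->; rewrite orbT);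
  by rewrite /x => /esym /n_Sn.
Qed.

Definition inv n (c : config n) := forall p q w,
  w < cview (ls c p) + su_sent (ls c p) -> exists d w', (p, q, SU d w w') \in sent c.

Lemma in_bc n (s q : 'I_n) b : (s, q, b) \in broadcast s b.
Proof. by apply: (map_f (fun p => (s, p, b))); rewrite mem_enum. Qed.

Lemma inv_step n (weight : nat -> 'I_n -> rat) c c' :
  step weight c c' -> inv c -> inv c'.
Proof.
move=> st I p q w.
have [_ _ _ sub] := step_mono p st.
case: st sub => [->|src dst b _ x ->|s x _ ->|s x [_ nsu _] ->|s d x [_ su _] _ ->|s d x _ _ ->|s x _ ->] sub;
  rewrite /upd /=; try (case: eqP => [->|_]) => /=;
  try (by move=> /(I _ q) [d' [w' H]]; exists d', w'; apply: sub).
- rewrite addn1 ltnS leq_eqVlt => /orP [/eqP ->|].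
    by exists (ldata x), (cview x).+1; rewrite mem_cat in_bc.
  move=> Hw; have : w < cview x + su_sent x by rewrite (negbTE nsu) addn0.
  by move=> /(I _ q) [d' [w' H]]; exists d', w'; apply: sub.
- rewrite addn0 => Hw; have : w < cview x + su_sent x by rewrite su addn1.
  by move=> /(I _ q) [d' [w' H]]; exists d', w'; apply: sub.
Qed.

Lemma inv_all n (weight : nat -> 'I_n -> rat) d0 c :
  execution weight d0 c -> forall t, inv (c t).
Proof.
move=> [c0 st]; elim => [|t IH]; last exact: inv_step (st t) IH.
by rewrite c0 => p q w.
Qed.

Lemma mono n (weight : nat -> 'I_n -> rat) d0 c : execution weight d0 c ->
  forall p t1 t2, t1 <= t2 ->
  [/\ cview (ls (c t1) p) <= cview (ls (c t2) p),
      {subset inbox (ls (c t1) p) <= inbox (ls (c t2) p)} &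
      {subset sent (c t1) <= sent (c t2)}].
Proof.
move=> [_ st] p t1 t2 /subnK <-; elim: (t2 - t1) => [|k [IH1 IH2 IH3]]; first by split.
have [/andP[a _] _ b d] := step_mono p (st (k + t1)).
rewrite addSn; split; [exact: leq_trans IH1 a | by move=> m /IH2 /b | by move=> m /IH3 /d].
Qed.

Lemma persist n (weight : nat -> 'I_n -> rat) d0 c p T :
  execution weight d0 c ->
  (forall a, T <= a -> cview (ls (c a) p) = cview (ls (c T) p)) ->
  forall a, T <= a ->
  (cv_sent (ls (c a) p) -> forall b, a <= b -> cv_sent (ls (c b) p)) /\
  (su_sent (ls (c a) p) -> forall b, a <= b -> su_sent (ls (c b) p)).
Proof.
move=> [c0 st] stab a Ta; split => H b /subnK <-; elim: (b - a) => [|k IH] //;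
  have [_ hc _ _] := step_mono p (st (k + a)); rewrite addSn;
  (have e : cview (ls (c (k + a).+1) p) = cview (ls (c (k + a)) p) by
     rewrite !stab //; lia);
  have [h1 h2] := hc e; auto.
Qed.

Lemma stabilize (g : nat -> nat) t v :
  (forall a b, t <= a -> a <= b -> g a <= g b) -> (forall a, t <= a -> g a <= v) ->
  exists T, t <= T /\ forall a, T <= a -> g a = g T.
Proof.
move=> mon bnd.
suff: forall k t', t <= t' -> v <= g t' + k -> exists T, t' <= T /\ forall a, T <= a -> g a = g T.
  by move=> /(_ v t (leqnn t)) []; [rewrite leq_addl | move=> T [h1 h2]; exists T; split].
elim => [|k IH] t' tt' hv.
  exists t'; split => // a ha; apply/eqP; rewrite eqn_leq (mon t' a) // andbT.
  rewrite addn0 in hv; apply: leq_trans (bnd a _) hv; lia.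
case: (classic (forall a, t' <= a -> g a = g t')) => [H|]; first by exists t'; split.
move=> /not_all_ex_not [a] Ha; have [ha hne] := imply_to_and _ _ Ha.
have lt : g t' < g a by rewrite ltn_neqAle (mon t' a) // andbT; apply/eqP => e; apply: hne.
have [T [h1 h2]] := IH a (leq_trans tt' ha) ltac:(lia).
by exists T; split => //; lia.
Qed.

Lemma common n (R : 'I_n -> nat -> Prop) :
  (forall p, exists T, forall a, T <= a -> R p a) ->
  exists T, forall p a, T <= a -> R p a.
Proof.
move=> H.
suff [T HT] : exists T, forall p, p \in enum 'I_n -> forall a, T <= a -> R p a.
  by exists T => p; apply: HT; rewrite mem_enum.
elim: (enum 'I_n) => [|q s [T HT]]; first by exists 0.
have [Tq Hq] := H q; exists (maxn T Tq) => p; rewrite inE => /orP [/eqP -> | ps] a ha.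
  by apply: Hq; lia.
by apply: HT => //; lia.
Qed.

Lemma wmaj n f (weight : nat -> 'I_n -> rat) (F A : {set 'I_n}) v :
  2 * f + 1 <= n -> weights_ok f weight -> #|F| <= f -> ~: F \subset A ->
  weighted_majority weight v A.
Proof.
move=> hn wok hF sub; have [wl _] := wok v.
have nf : (0 < n - f)%N by lia.
have n0 : (0 < n)%N by lia.
have wpos : forall s, (0 < weight v s)%R.
  move=> s; have [h _] := wl s; rewrite ltNge; apply/negP => hw.
  have : (2 * (n - f)%:R * weight v s <= 0)%R.
    by apply: mulr_ge0_le0 => //; apply: mulr_ge0 => //.
  by move=> h2; have := lt_le_trans h h2; rewrite ltNge ler0n.
rewrite /weighted_majority /wsum (big_setID (~: F)) /=.
rewrite (setIidPr sub).
apply: (@lt_le_trans _ _ (\sum_(i in ~: F) weight v i)%R); last first.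
  by rewrite lerDl; apply: sumr_ge0 => i _; apply: ltW.
have cardC : (n - f <= #|~: F|)%N.
  by rewrite cardsCs setCK card_ord leq_sub2l.
have hne : (0 < #|~: F|)%N by apply: leq_trans cardC.
have key : ((n - f)%:R * n%:R < (n - f)%:R * (2 * \sum_(i in ~: F) weight v i) :> rat)%R.
  rewrite mulrA (mulrC _ 2%R) mulr_sumr.
  apply: (@le_lt_trans _ _ (\sum_(i in ~: F) (n%:R : rat))%R).
    by rewrite sumr_const -(mulr_natr (n%:R : rat) #|~: F|) -!natrM ler_nat mulnC leq_mul2l cardC orbT.
  apply: ltr_sum; last by move=> i _; have [h _] := wl i.
  by case/card_gt0P: hne => x hx; apply/hasP; exists x => //; rewrite mem_index_enum.
rewrite ltr_pM2l ?ltr0n // in key.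
by rewrite ltr_pdivrMr // mulrC.
Qed.
Unset Implicit Arguments.

Theorem lemma6 (n f : nat) (weight : nat -> 'I_n -> rat) (d0 : data)
  (c : nat -> config n) (v t : nat) :
  2 * f + 1 <= n ->
  weights_ok f weight ->
  execution weight d0 c ->
  at_most_f_crash c f ->
  reliable_links c ->
  fair weight c ->
  installed_sys (c t) v ->
  exists t', t <= t' /\ installed_sys (c t') v.+1.
Proof.
move=> hn wok ex [F [hF corrF]] rl fair [_ Hle].
have [c0 st] := ex.
apply: NNPP => Hn.
have allle : forall a s, t <= a -> cview (ls (c a) s) <= v.
  move=> a s /subnK <-; elim: (a - t) s => [|k IH] s; first exact: Hle.
  rewrite addSn; have [/andP [_ h] _ _ _] := step_mono s (st (k + t)).
  rewrite leqNgt; apply/negP => hlt; apply: Hn; exists (k + t).+1; split; first lia.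
  split; first by exists s; have := IH s; lia.
  by move=> s'; have := IH s'; have [/andP [_ h'] _ _ _] := step_mono s' (st (k + t)); lia.
have [T0 HT0] : exists T, forall s a, T <= a -> t <= a /\ forall b, a <= b ->
                    cview (ls (c b) s) = cview (ls (c a) s).
  apply: common => s.
  have mon : forall a b, t <= a -> a <= b -> cview (ls (c a) s) <= cview (ls (c b) s).
    by move=> a b _ ab; have [] := mono ex s ab.
  have [Ts [h1 h2]] := @stabilize (fun a => cview (ls (c a) s)) t v mon (fun a => allle a s).
  exists Ts => a ha; split; first lia.
  by move=> b hb; rewrite h2 ?(h2 a) //; lia.
have stab : forall s a, T0 <= a -> cview (ls (c a) s) = cview (ls (c T0) s).
  by move=> s a ha; have [_ h] := HT0 s T0 (leqnn _); exact: h.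
have [s0 s0F] : exists s0, s0 \notin F.
  have : 0 < #|~: F| by rewrite cardsCs setCK card_ord; lia.
  by case/card_gt0P => x; rewrite inE => hx; exists x.
set s1 := [arg min_(s < s0 | s \notin F) cview (ls (c T0) s)].
have [s1F s1min] : s1 \notin F /\
    forall s, s \notin F -> cview (ls (c T0) s1) <= cview (ls (c T0) s).
  by rewrite /s1; case: (@arg_minnP _ s0 (fun s => s \notin F) (fun s => cview (ls (c T0) s)) s0F) => i hi hm; split.
set m := cview (ls (c T0) s1).
have evsu : forall p, p \notin F ->
    exists T2, T0 <= T2 /\ forall a, T2 <= a -> su_sent (ls (c a) p).
  move=> p pF; have cp := corrF p pF.
  have stp : forall a, T0 <= a -> cview (ls (c a) p) = cview (ls (c T0) p) := stab p.
  have [[t1 [h1 n1]] _ _] := fair p cp T0.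
  have cv1 : cv_sent (ls (c t1) p) by apply: contra_notT n1 => ncv; split.
  have [_ [t2 [h2 n2]] _] := fair p cp t1.
  have cv2 : cv_sent (ls (c t2) p) := (persist ex stp h1).1 cv1 t2 h2.
  have su2 : su_sent (ls (c t2) p) by apply: contra_notT n2 => nsu; split => //; left.
  have h02 : T0 <= t2 by lia.
  by exists t2; split => // a ha; exact: ((persist ex stp h02).2 su2 a ha).
have evrec : forall p, exists T3, forall a, T3 <= a -> p \notin F ->
    p \in su_senders (ls (c a) s1) m /\ su_sent (ls (c a) p).
  move=> p; case: (boolP (p \in F)) => pF; first by exists 0 => a _.
  have [T2 [h2 hsu]] := evsu p pF.
  have : m < cview (ls (c T2) p) + su_sent (ls (c T2) p).
    by rewrite hsu // addn1 ltnS (stab p T2 h2); exact: s1min.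
  move=> /(@inv_all _ _ _ _ ex T2 p s1 m) [d [w' hin]].
  have [t3 hr] := rl T2 p s1 _ hin (corrF s1 s1F).
  exists (maxn t3 T2) => a ha _; split; last by apply: hsu; lia.
  rewrite /su_senders inE; apply/hasP; exists (p, SU d m w'); last by rewrite /= !eqxx.
  have ta : t3 <= a by lia.
  by have [_ hsub _] := mono ex s1 ta; exact: hsub.
have [T4 HT4] := common evrec.
have [_ _ [t' [h' ni]]] := fair s1 (corrF s1 s1F) (maxn T4 T0).
have h4 : T4 <= t' by lia.
apply: ni; split.
- exact: corrF s1 s1F t'.
- by have [] := HT4 s1 t' h4 s1F.
- rewrite (stab s1 t'); last by lia.
  apply: wmaj hn wok hF _; apply/subsetP => p; rewrite inE => pF.
  by have [] := HT4 p t' h4 pF.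
Qed.
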